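(* For every $[\mu]\in\mathbb PV_n$ one has $F_n([\mu])\ge\frac4n$, so $\frac4n$ is the minimum value of $F_n:\mathbb PV_n\to\mathbb R$. Moreover, $F_n([\mu])=\frac4n$ if and only if $[\mu]$ is a critical point of $F_n$ of type $(0;n)$, i.e. if and only if $\mathrm M_\mu$ is a real multiple of the identity.
   Context: $V_n$ is the space of bilinear maps $\mu:\mathbb C^n\times\mathbb C^n\to\mathbb C^n$ with standard Hermitian structures. $L^\mu_XY=\mu(X,Y)$, $R^\mu_XY=\mu(Y,X)$, $\mathrm M_\mu=2\sum_i L^\mu_{X_i}(L^\mu_{X_i})^*-2\sum_i (L^\mu_{X_i})^*L^\mu_{X_i}-2\sum_i (R^\mu_{X_i})^*R^\mu_{X_i}$ ($\{X_i\}$ orthonormal), $\|\mu\|^2=\sum_{i,j}\|\mu(X_i,X_j)\|^2$, $F_n([\mu])=\operatorname{tr}\mathrm M_\mu^2/\|\mu\|^4$. $[\mu]$ is a critical point of $F_n$ iff $\mathrm M_\mu=c_\mu I+D_\mu$ with $c_\mu\in\mathbb R$, $D_\mu$ a derivation of $\mu$; it is of type $(0;n)$ when moreover $D_\mu=0$. *)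

(* Defs.v *)
(* Complex numbers: an arbitrary numClosedFieldType C
   (e.g. the complex numbers R[i]); conjugation is Num.conj (notation x^* ). *)
From mathcomp Require Import all_boot all_order all_algebra.
Set Implicit Arguments. Unset Strict Implicit. Unset Printing Implicit Defensive.
Import Order.TTheory GRing.Theory Num.Theory.
Local Open Scope ring_scope.

(* A bilinear map mu : C^n x C^n -> C^n, given by its structure constants
   w.r.t. the standard (orthonormal) basis X_0..X_{n-1}:
   mu(X_i, X_j) = \sum_k mu i j k X_k. *)
Definition bilin (C : numClosedFieldType) (n : nat) := 'I_n -> 'I_n -> 'I_n -> C.

Section Defs.
Variables (C : numClosedFieldType) (n : nat).
Implicit Types (mu : bilin C n) (A D : 'M[C]_n).

Definition muv mu (i j : 'I_n) : 'cV[C]_n := \col_k mu i j k.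

Definition adj A : 'M[C]_n := (map_mx Num.conj A)^T.

(* L^mu_{X_i} : Y |-> mu(X_i, Y);  column j is mu(X_i, X_j) *)
Definition Lmat mu (i : 'I_n) : 'M[C]_n := \matrix_(k, j) mu i j k.
(* R^mu_{X_i} : Y |-> mu(Y, X_i);  column j is mu(X_j, X_i) *)
Definition Rmat mu (i : 'I_n) : 'M[C]_n := \matrix_(k, j) mu j i k.

Definition Mmu mu : 'M[C]_n :=
  2%:R *: (\sum_i Lmat mu i *m adj (Lmat mu i))
  - 2%:R *: (\sum_i adj (Lmat mu i) *m Lmat mu i)
  - 2%:R *: (\sum_i adj (Rmat mu i) *m Rmat mu i).

Definition normsq mu : C := \sum_i \sum_j \sum_k `|mu i j k| ^+ 2.

Definition Fn mu : C := \tr (Mmu mu *m Mmu mu) / (normsq mu ^+ 2).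

Definition is_derivation mu D : Prop :=
  forall i j : 'I_n,
    D *m muv mu i j = \sum_a D a i *: muv mu a j + \sum_b D b j *: muv mu i b.

Definition critical mu : Prop :=
  exists (c : C) (D : 'M[C]_n),
    c \is Num.real /\ is_derivation mu D /\ Mmu mu = c%:M + D.

Definition critical_type0n mu : Prop :=
  exists (c : C) (D : 'M[C]_n),
    c \is Num.real /\ is_derivation mu D /\ Mmu mu = c%:M + D /\ D = 0.

End Defs.

(* Main.v *)
Require Import Defs.
From mathcomp Require Import all_boot all_order all_algebra.
From mathcomp Require Import ring.
Import Order.TTheory GRing.Theory Num.Theory.
Local Open Scope ring_scope.

Section H.
Variables (C : numClosedFieldType) (n : nat).
Implicit Types (A B : 'M[C]_n).

Lemma adjE A i j : adj A i j = (A j i)^*.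
Proof. by rewrite /adj !mxE. Qed.

Lemma adj_mul A B : adj (A *m B) = adj B *m adj A.
Proof.
apply/matrixP => i j; rewrite adjE !mxE rmorph_sum /=.
apply: eq_bigr => k _; rewrite !adjE rmorphM /= mulrC.
by [].
Qed.

Lemma adjK A : adj (adj A) = A.
Proof. by apply/matrixP => i j; rewrite !adjE conjCK. Qed.

Lemma adjD A B : adj (A + B) = adj A + adj B.
Proof. by apply/matrixP => i j; rewrite !mxE rmorphD. Qed.

Lemma adjN A : adj (- A) = - adj A.
Proof. by apply/matrixP => i j; rewrite !mxE rmorphN. Qed.

Lemma adjB A B : adj (A - B) = adj A - adj B.
Proof. by rewrite adjD adjN. Qed.

Lemma adj0 : adj (0 : 'M[C]_n) = 0.
Proof. by apply/matrixP => i j; rewrite !mxE rmorph0. Qed.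

Lemma adj_sum (I : finType) (F : I -> 'M[C]_n) : adj (\sum_i F i) = \sum_i adj (F i).
Proof. exact: (big_morph _ adjD adj0). Qed.

Lemma adjZ (c : C) A : c \is Num.real -> adj (c *: A) = c *: adj A.
Proof. by move=> cr; apply/matrixP => i j; rewrite !mxE rmorphM /= conj_Creal. Qed.

Lemma adj_scalar (c : C) : c \is Num.real -> adj (c%:M : 'M[C]_n) = c%:M.
Proof.
move=> cr; apply/matrixP => i j; rewrite adjE !mxE rmorphMn /= conj_Creal //.
by rewrite eq_sym.
Qed.

Lemma tr_adj A : \tr (A *m adj A) = \sum_i \sum_j `|A i j| ^+ 2.
Proof.
apply: eq_bigr => i _; rewrite mxE; apply: eq_bigr => j _.
by rewrite adjE normCK.
Qed.

Lemma tr_adj_ge0 A : 0 <= \tr (A *m adj A).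
Proof.
rewrite tr_adj; apply: sumr_ge0 => i _; apply: sumr_ge0 => j _.
exact: exprn_ge0.
Qed.

Lemma tr_adj_eq0 A : \tr (A *m adj A) = 0 -> A = 0.
Proof.
rewrite tr_adj => H; apply/matrixP => i j; rewrite mxE.
have H1 : \sum_j `|A i j| ^+ 2 = 0.
  apply: (psumr_eq0P _ H) => // k _; apply: sumr_ge0 => l _; exact: exprn_ge0.
have H2 : `|A i j| ^+ 2 = 0.
  apply: (psumr_eq0P _ H1) => // k _; exact: exprn_ge0.
by apply/eqP; rewrite -normr_eq0 -sqrf_eq0 H2.
Qed.

Lemma tr_shift A (c : C) : \tr ((A - c%:M) *m (A - c%:M)) =
  \tr (A *m A) - 2%:R * c * \tr A + c ^+ 2 * n%:R.
Proof.
rewrite mulmxBl !mulmxBr !mul_mx_scalar mul_scalar_mx !raddfB /= !mxtraceZ.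
rewrite mxtrace_scalar -mulr_natr; ring.
Qed.

End H.

Section M.
Variables (C : numClosedFieldType) (n : nat) (mu : bilin C n).

Lemma N_ge0 : 0 <= normsq mu.
Proof.
apply: sumr_ge0 => i _; apply: sumr_ge0 => j _; apply: sumr_ge0 => k _.
exact: exprn_ge0.
Qed.

Lemma trL : \sum_i \tr (Lmat mu i *m adj (Lmat mu i)) = normsq mu.
Proof.
apply: eq_bigr => i _; rewrite tr_adj exchange_big; apply: eq_bigr => j _.
by apply: eq_bigr => k _; rewrite mxE.
Qed.

Lemma trR : \sum_i \tr (Rmat mu i *m adj (Rmat mu i)) = normsq mu.
Proof.
rewrite /normsq [RHS]exchange_big; apply: eq_bigr => i _; rewrite tr_adj exchange_big.
by apply: eq_bigr => j _; apply: eq_bigr => k _; rewrite mxE.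
Qed.

Lemma trM : \tr (Mmu mu) = - (2%:R * normsq mu).
Proof.
rewrite /Mmu !raddfB /= !mxtraceZ !linear_sum /=.
have -> : \sum_i \tr (adj (Lmat mu i) *m Lmat mu i) = normsq mu.
  by rewrite -trL; apply: eq_bigr => i _; rewrite mxtrace_mulC.
have -> : \sum_i \tr (adj (Rmat mu i) *m Rmat mu i) = normsq mu.
  by rewrite -trR; apply: eq_bigr => i _; rewrite mxtrace_mulC.
rewrite trL; ring.
Qed.

Lemma herm_sum (F : 'I_n -> 'M[C]_n) :
  adj (\sum_i F i *m adj (F i)) = \sum_i F i *m adj (F i).
Proof. by rewrite adj_sum; apply: eq_bigr => i _; rewrite adj_mul adjK. Qed.

Lemma herm_sum' (F : 'I_n -> 'M[C]_n) :
  adj (\sum_i adj (F i) *m F i) = \sum_i adj (F i) *m F i.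
Proof. by rewrite adj_sum; apply: eq_bigr => i _; rewrite adj_mul adjK. Qed.

Lemma hermM : adj (Mmu mu) = Mmu mu.
Proof.
by rewrite /Mmu !adjB !adjZ ?rpred_nat // herm_sum !herm_sum'.
Qed.

End M.

Theorem lemma4p5 (C : numClosedFieldType) (n : nat) (mu : bilin C n) :
  (0 < n)%N -> (exists i j k, mu i j k != 0) ->
  (4%:R / n%:R <= Fn mu)
  /\ (Fn mu = 4%:R / n%:R <-> critical_type0n mu)
  /\ (Fn mu = 4%:R / n%:R <-> exists c : C, c \is Num.real /\ Mmu mu = c%:M).
Proof.
move=> n0 [i0 [j0 [k0 nz]]].
set N := normsq mu; set M := Mmu mu.
have N0 : N != 0.
  apply/eqP => H.
  have H1 : \sum_j \sum_k `|mu i0 j k| ^+ 2 = 0.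
    apply: (psumr_eq0P _ H) => // i _; apply: sumr_ge0 => j _; apply: sumr_ge0 => k _; exact: exprn_ge0.
  have H2 : \sum_k `|mu i0 j0 k| ^+ 2 = 0.
    apply: (psumr_eq0P _ H1) => // j _; apply: sumr_ge0 => k _; exact: exprn_ge0.
  have H3 : `|mu i0 j0 k0| ^+ 2 = 0.
    apply: (psumr_eq0P _ H2) => // k _; exact: exprn_ge0.
  by move: nz; rewrite -normr_eq0 -sqrf_eq0 H3 eqxx.
have nn0 : (n%:R : C) != 0 by rewrite pnatr_eq0 -lt0n.
set c : C := - (2%:R * N) / n%:R.
have cr : c \is Num.real.
  by rewrite /c rpredM ?rpredN ?rpredV ?rpredM ?rpred_nat ?ger0_real ?N_ge0.
set B := M - c%:M.
have hB : adj B = B by rewrite /B adjB hermM adj_scalar.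
have key : \tr (M *m M) = 4%:R * N ^+ 2 / n%:R + \tr (B *m adj B).
  rewrite hB /B tr_shift /M trM -/N /c. field; exact: nn0.
have FE : Fn mu = 4%:R / n%:R + \tr (B *m adj B) / N ^+ 2.
  by rewrite /Fn -/M -/N key; field; rewrite N0 nn0.
have eqB : Fn mu = 4%:R / n%:R <-> B = 0.
  rewrite FE; split.
    move=> /(congr1 (fun x => x - 4%:R / n%:R)); rewrite addrAC subrr add0r.
    move/eqP; rewrite mulf_eq0 invr_eq0 expf_eq0 (negPf N0) andbF orbF.
    by move/eqP/tr_adj_eq0.
  by move=> ->; rewrite adj0 mul0mx linear0 mul0r addr0.
have eqC : B = 0 <-> exists c : C, c \is Num.real /\ Mmu mu = c%:M.
  split.
    by move/eqP; rewrite subr_eq0 => /eqP H; exists c.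
  move=> [c' [_ Hc']]; have : \tr M = \tr (c'%:M : 'M[C]_n) by rewrite /M Hc'.
  rewrite mxtrace_scalar /M trM -/N => Ht.
  have ec : c = c' by rewrite /c Ht -[c' *+ n]mulr_natr mulfK.
  by rewrite /B /M Hc' ec subrr.
split.
  by rewrite FE lerDl divr_ge0 ?tr_adj_ge0 // exprn_ge0 ?N_ge0.
split; last by rewrite eqB.
rewrite eqB eqC; split.
  move=> [c' [cr' Hc']]; exists c', 0; split => //; split; last by rewrite addr0.
  by move=> i j; rewrite mul0mx !big1 ?addr0 // => ? _; rewrite mxE scale0r.
by move=> [c' [D [cr' [_ [HM HD]]]]]; exists c'; split => //; rewrite HM HD addr0.
Qed.
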